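(* Let $P$ be a poset on $[n]$ whose labeling is natural, and let $x_1,\dots,x_n$ be strictly positive reals. The continuous time Markov chain given by the uniform promotion graph of $P$ has the uniform stationary distribution; that is, with $M$ its transition matrix, $\sum_{\pi\in\mathcal{L}(P)}M(\pi',\pi)=0$ for every $\pi'\in\mathcal{L}(P)$.
   Context: Linear extensions: $\mathcal{L}(P)=\{\pi\in S_n : i\prec j \text{ in } P \Rightarrow \pi^{-1}_i<\pi^{-1}_j\}$, in one-line notation $\pi=\pi_1\cdots\pi_n$. For $1\le i<n$, $\pi\tau_i$ swaps $\pi_i,\pi_{i+1}$ if they are incomparable in $P$ and is $\pi$ otherwise; operators act on the right, $\pi(\sigma\tau)=(\pi\sigma)\tau$. Extended promotion: $\partial_j=\tau_j\tau_{j+1}\cdots\tau_{n-1}$, $1\le j\le n$. Uniform promotion graph: vertex set $\mathcal{L}(P)$, and for each $\pi$ and $j\in[n]$ a directed edge $\pi\to\pi\partial_j$ of weight $x_j$. Transition matrix $M$: for $\pi'\ne\pi$, $M(\pi',\pi)$ is the sum of weights of edges $\pi\to\pi'$; $M(\pi,\pi)$ is minus the sum of weights of edges $\pi\to\pi'$ with $\pi'\ne\pi$. *)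

(* Defs.v *)
From mathcomp Require Import all_boot all_order all_fingroup all_algebra.
Set Implicit Arguments. Unset Strict Implicit. Unset Printing Implicit Defensive.
Import GRing.Theory Num.Theory.

(* A poset on [n] = {0,...,n-1} (0-based labels), given by its (reflexive)
   order relation [le]. *)
Definition is_poset (n : nat) (le : rel 'I_n) : Prop :=
  [/\ reflexive le, antisymmetric le & transitive le].

Definition natural_labeling (n : nat) (le : rel 'I_n) : Prop :=
  forall i j : 'I_n, le i j -> (i <= j)%N.

Definition ltP (n : nat) (le : rel 'I_n) (i j : 'I_n) : bool := le i j && (i != j).
Definition incomp (n : nat) (le : rel 'I_n) (i j : 'I_n) : bool :=
  ~~ le i j && ~~ le j i.

(* A permutation pi of 'I_n is read in one-line notation pi_0 pi_1 ... pi_{n-1}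
   with pi_k = pi k (position k holds the label pi k). *)
Definition linext (n : nat) (le : rel 'I_n) : {set {perm 'I_n}} :=
  [set pi : {perm 'I_n} | [forall i, forall j,
     ltP le i j ==> ((pi^-1)%g i < (pi^-1)%g j)%N]].

Definition tau (n : nat) (le : rel 'I_n) (pi : {perm 'I_n}) (k : nat)
  : {perm 'I_n} :=
  match (insub k : option 'I_n), (insub k.+1 : option 'I_n) with
  | Some a, Some b =>
      if incomp le (pi a) (pi b) then (tperm a b * pi)%g else pi
  | _, _ => pi
  end.

(* Extended promotion pi partial_j = pi tau_j tau_{j+1} ... tau_{n-2}
   (0-based; paper's partial_{j+1}), operators acting on the right. *)
Definition promo (n : nat) (le : rel 'I_n) (pi : {perm 'I_n}) (j : 'I_n)
  : {perm 'I_n} :=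
  foldl (tau le) pi (iota j (n.-1 - j)).

Definition transM (R : pzRingType) (n : nat) (le : rel 'I_n) (x : 'I_n -> R)
  (pi' pi : {perm 'I_n}) : R :=
  if pi' != pi then (\sum_(j : 'I_n | promo le pi j == pi') x j)%R
  else (- \sum_(j : 'I_n | promo le pi j != pi) x j)%R.

(* Main.v *)
Require Import Defs.
From mathcomp Require Import all_boot all_order all_fingroup all_algebra.
From mathcomp Require Import zify.
Import GRing.Theory Num.Theory.
Local Open Scope ring_scope.

Lemma incompC (n : nat) (le : rel 'I_n) i j : incomp le i j = incomp le j i.
Proof. by rewrite /incomp andbC. Qed.

Lemma tauK (n : nat) (le : rel 'I_n) k : involutive (fun pi => tau le pi k).
Proof.
move=> pi; rewrite /tau.
case: (insub k) => [a|] //; case: (insub k.+1) => [b|] //.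
case H: (incomp le (pi a) (pi b)).
  by rewrite !permM tpermL tpermR incompC H tpermKg.
by rewrite H.
Qed.

Lemma tau_linext (n : nat) (le : rel 'I_n) k pi :
  pi \in linext le -> tau le pi k \in linext le.
Proof.
rewrite /tau.
case Ha: (insub k) => [a|] //; case Hb: (insub k.+1) => [b|] //.
case H: (incomp le (pi a) (pi b)) => //.
have ea : nat_of_ord a = k by move: Ha; case: insubP => // u _ <- [] ->.
have eb : nat_of_ord b = k.+1 by move: Hb; case: insubP => // u _ <- [] ->.
rewrite !inE => /forallP L; apply/forallP => i; apply/forallP => j.
apply/implyP => lij; have := implyP (forallP (L i) j) lij.
rewrite invMg !permM.
set p := (pi^-1)%g i; set q := (pi^-1)%g j => pq.
have Hnot : ~ (p = a /\ q = b).
  move=> [ep eq]; move: H lij; rewrite /incomp /Defs.ltP.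
  have -> : pi a = i by rewrite -ep /p permKV.
  have -> : pi b = j by rewrite -eq /q permKV.
  by case: (le i j).
rewrite tpermV.
have tv : forall u : 'I_n, nat_of_ord (tperm a b u) =
   if u == a then k.+1 else if u == b then k else nat_of_ord u.
  have ab : (b == a) = false.
    by apply/negbTE; apply/eqP => E; move: eb; rewrite E ea; lia.
  move=> u; case: tpermP => [->|->|/eqP n1 /eqP n2]; rewrite ?eqxx ?ab ?eqxx ?ea ?eb //.
  by move: n1 n2; do 2 case: eqP => //.
rewrite !tv.
have pa : (p == a) = (nat_of_ord p == k) by rewrite -ea.
have pb : (p == b) = (nat_of_ord p == k.+1) by rewrite -eb.
have qa : (q == a) = (nat_of_ord q == k) by rewrite -ea.
have qb : (q == b) = (nat_of_ord q == k.+1) by rewrite -eb.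
have Hn : ~ (nat_of_ord p = k /\ nat_of_ord q = k.+1).
  move=> [E1 E2]; apply: Hnot; split; apply: ord_inj; by rewrite ?E1 ?E2 ?ea ?eb.
rewrite pa pb qa qb.
move: pq Hn; generalize (nat_of_ord p) (nat_of_ord q) => P Q.
case: (P =P k); case: (P =P k.+1); case: (Q =P k); case: (Q =P k.+1).
all: intros; lia.
Qed.

Lemma foldl_tau_inj (n : nat) (le : rel 'I_n) s :
  injective (fun pi => foldl (tau le) pi s).
Proof.
elim: s => [|k s IH] pi1 pi2 //= E.
by move: (IH _ _ E) => H; rewrite -[pi1](tauK _ le k) -[pi2](tauK _ le k) /= H.
Qed.

Lemma foldl_tau_linext (n : nat) (le : rel 'I_n) s pi :
  pi \in linext le -> foldl (tau le) pi s \in linext le.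
Proof. by elim: s pi => [|k s IH] pi //= H; apply: IH; apply: tau_linext. Qed.

Lemma promo_onto (n : nat) (le : rel 'I_n) (j : 'I_n) pi' :
  pi' \in linext le -> exists2 pi0, pi0 \in linext le & promo le pi0 j = pi'.
Proof.
move=> H.
have inj : injective (fun pi => promo le pi j) by apply: foldl_tau_inj.
have sub : (fun pi => promo le pi j) @: linext le \subset linext le.
  by apply/subsetP => y /imsetP [pi Hpi ->]; apply: foldl_tau_linext.
have E : (fun pi => promo le pi j) @: linext le = linext le.
  by apply/eqP; rewrite eqEcard sub (card_imset _ inj) leqnn.
have : pi' \in (fun pi => promo le pi j) @: linext le by rewrite E.
by case/imsetP => pi0 H0 ->; exists pi0.
Qed.

Theorem theorem4p3 (R : realFieldType) (n : nat) (le : rel 'I_n)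
  (x : 'I_n -> R) :
  is_poset le -> natural_labeling le -> (forall j, 0 < x j) ->
  forall pi' : {perm 'I_n}, pi' \in linext le ->
    \sum_(pi in linext le) transM le x pi' pi = 0.
Proof.
move=> _ _ _ pi' Hpi'.
rewrite (bigD1 pi') //= /transM eqxx /=.
have -> : \sum_(pi in linext le | pi != pi')
   (if pi' != pi then \sum_(j | promo le pi j == pi') x j
    else - \sum_(j | promo le pi j != pi) x j)
  = \sum_(pi in linext le | pi != pi') \sum_j
      (if promo le pi j == pi' then x j else 0).
  apply: eq_bigr => pi /andP [_ np]; rewrite eq_sym np.
  by rewrite big_mkcond.
rewrite addrC exchange_big /= [X in _ - X]big_mkcond -sumrB big1 // => j _.
have [pi0 H0 E0] := @promo_onto _ _ j _ Hpi'.
have inj : injective (fun pi => promo le pi j) by apply: foldl_tau_inj.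
rewrite -big_mkcondr /=.
have -> : (promo le pi' j != pi') = (pi0 != pi').
  apply/negb_inj; rewrite !negbK; apply/eqP/eqP => [E|E]; last by rewrite -{1}E E0.
  by apply: inj; rewrite /= E0 E.
case: (pi0 =P pi') => [E|/eqP ne].
  rewrite /= subr0 big_pred0 // => pi; apply/negbTE.
  apply/andP => [[/andP [_ np] /eqP E']].
  have : pi = pi0 by apply: inj; rewrite /= E' E0.
  by move=> Epi; move: np; rewrite Epi E eqxx.
rewrite (big_pred1 pi0) ?subrr // => pi /=.
apply/idP/eqP => [/andP [/andP [_ _] /eqP E] | ->].
  by apply: inj; rewrite /= E E0.
by rewrite H0 ne E0 eqxx.
Qed.
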